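(* Let $A\in\mathbb{R}^{d\times d}$ be invertible, $\bm{b}\in\mathbb{R}^d$, $\bm{x}^\ast=A^{-1}\bm{b}$, $\bm{x}_0\in\mathbb{R}^d$, $\Sigma_0$ symmetric positive-definite. Let $\bm{x}_m$ be the BayesCG mean, defined by the recursion: $\bm{r}_0=\bm{b}-A\bm{x}_0$, $\tilde{\bm{s}}_1=\bm{r}_0$, $\bm{s}_k=\tilde{\bm{s}}_k/\|\tilde{\bm{s}}_k\|_{A\Sigma_0A^\top}$, $\bm{x}_k=\bm{x}_0+\Sigma_0A^\top S_k\Lambda_k^{-1}S_k^\top\bm{r}_0$ with $S_k=[\bm{s}_1,\dots,\bm{s}_k]$ and $\Lambda_k=S_k^\top A\Sigma_0A^\top S_k$, $\bm{r}_k=\bm{b}-A\bm{x}_k$, $\tilde{\bm{s}}_{k+1}=\bm{r}_k-\langle\bm{s}_k,\bm{r}_k\rangle_{A\Sigma_0A^\top}\bm{s}_k$, assuming $\tilde{\bm{s}}_1,\dots,\tilde{\bm{s}}_m\ne\bm{0}$. For $n\ge0$, let $K_n(M,\bm{v})=\operatorname{span}(\bm{v},M\bm{v},\dots,M^n\bm{v})$ and $K_n^\ast=\{\bm{x}_0+\bm{v}:\bm{v}\in K_n(\Sigma_0A^\top A,\Sigma_0A^\top\bm{r}_0)\}$. Then \[\bm{x}_m=\operatorname*{arg\,min}_{\bm{x}\in K_{m-1}^\ast}\|\bm{x}-\bm{x}^\ast\|_{\Sigma_0^{-1}}.\]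
   Context: $\langle\bm{u},\bm{v}\rangle_{B}=\bm{u}^\top B\bm{v}$ and $\|\bm{v}\|_B=\sqrt{\bm{v}^\top B\bm{v}}$ for symmetric positive-definite $B$. *)

(* Defs.v *)
From mathcomp Require Import all_boot all_order all_algebra.
From mathcomp Require Import reals.
Set Implicit Arguments. Unset Strict Implicit. Unset Printing Implicit Defensive.
Import Order.TTheory GRing.Theory Num.Theory.
Local Open Scope ring_scope.

Definition ipB (R : realType) (d : nat) (B : 'M[R]_d) (u v : 'cV[R]_d) : R :=
  (u^T *m B *m v) 0 0.

Definition normB (R : realType) (d : nat) (B : 'M[R]_d) (v : 'cV[R]_d) : R :=
  Num.sqrt (ipB B v v).

Definition spd (R : realType) (d : nat) (B : 'M[R]_d) : Prop :=
  B^T = B /\ forall v : 'cV[R]_d, v != 0 -> 0 < ipB B v v.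

Definition Smx (R : realType) (d : nat) (s : seq 'cV[R]_d) : 'M[R]_(d, size s) :=
  \matrix_(i < d, j < size s) (nth 0 s j) i 0.

Definition bcgM (R : realType) (d : nat) (A Sigma0 : 'M[R]_d) : 'M[R]_d :=
  A *m Sigma0 *m A^T.

Definition bcg_x (R : realType) (d : nat) (A Sigma0 : 'M[R]_d) (b x0 : 'cV[R]_d)
  (s : seq 'cV[R]_d) : 'cV[R]_d :=
  let r0 := b - A *m x0 in
  let S := Smx s in
  x0 + Sigma0 *m A^T *m S *m invmx (S^T *m bcgM A Sigma0 *m S) *m S^T *m r0.

(* given S_{k-1} = [s_1..s_{k-1}], the unnormalised direction stilde_k:
   stilde_1 = r0 ; stilde_{k} = r_{k-1} - <s_{k-1}, r_{k-1}>_M s_{k-1} *)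
Definition bcg_stilde_next (R : realType) (d : nat) (A Sigma0 : 'M[R]_d)
  (b x0 : 'cV[R]_d) (s : seq 'cV[R]_d) : 'cV[R]_d :=
  match s with
  | [::] => b - A *m x0
  | _ :: _ =>
      let sk := last 0 s in
      let rk := b - A *m bcg_x A Sigma0 b x0 s in
      rk - ipB (bcgM A Sigma0) sk rk *: sk
  end.

Fixpoint bcg_dirs (R : realType) (d : nat) (A Sigma0 : 'M[R]_d)
  (b x0 : 'cV[R]_d) (k : nat) : seq 'cV[R]_d :=
  match k with
  | 0 => [::]
  | k'.+1 =>
      let S := bcg_dirs A Sigma0 b x0 k' in
      let st := bcg_stilde_next A Sigma0 b x0 S in
      rcons S ((normB (bcgM A Sigma0) st)^-1 *: st)
  end.

(* stilde_k for k >= 1 *)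
Definition bcg_stilde (R : realType) (d : nat) (A Sigma0 : 'M[R]_d)
  (b x0 : 'cV[R]_d) (k : nat) : 'cV[R]_d :=
  bcg_stilde_next A Sigma0 b x0 (bcg_dirs A Sigma0 b x0 k.-1).

Definition bcg_mean (R : realType) (d : nat) (A Sigma0 : 'M[R]_d)
  (b x0 : 'cV[R]_d) (k : nat) : 'cV[R]_d :=
  bcg_x A Sigma0 b x0 (bcg_dirs A Sigma0 b x0 k).

Definition in_krylov (R : realType) (d : nat) (n : nat) (M : 'M[R]_d)
  (v w : 'cV[R]_d) : Prop :=
  exists c : 'I_n.+1 -> R, w = \sum_(i < n.+1) c i *: iter i (mulmx M) v.

Definition in_Kstar (R : realType) (d : nat) (A Sigma0 : 'M[R]_d)
  (b x0 : 'cV[R]_d) (n : nat) (x : 'cV[R]_d) : Prop :=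
  exists v, in_krylov n (Sigma0 *m A^T *m A) (Sigma0 *m A^T *m (b - A *m x0)) v
            /\ x = x0 + v.

(* Main.v *)
Require Import Defs.
From mathcomp Require Import all_boot all_order all_algebra.
From mathcomp Require Import reals.
From mathcomp Require Import zify.
Set Implicit Arguments. Unset Strict Implicit. Unset Printing Implicit Defensive.
Import Order.TTheory GRing.Theory Num.Theory.
Local Open Scope ring_scope.

Lemma trmx_sumE (R : realType) (m n : nat) (I : finType) (F : I -> 'M[R]_(m,n)) :
  (\sum_i F i)^T = \sum_i (F i)^T.
Proof. exact: (raddf_sum (@trmx R m n)). Qed.

Lemma ipB_sym (R : realType) d (B : 'M[R]_d) u v : B^T = B -> ipB B u v = ipB B v u.
Proof.
move=> hB; rewrite /ipB.
transitivity (((u^T *m B *m v)^T) 0 0); first by rewrite [in RHS]mxE.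
by rewrite !trmx_mul trmxK hB mulmxA.
Qed.

Lemma col_mulE (R : realType) m n p (A : 'M[R]_(m,n)) (B : 'M[R]_(n,p)) j :
  col j (A *m B) = A *m col j B.
Proof. by apply/matrixP => a b; rewrite !mxE; apply: eq_bigr => k _; rewrite !mxE. Qed.

Lemma ipB_entry (R : realType) d n p (B : 'M[R]_d) (X : 'M[R]_(d,n)) (Y : 'M[R]_(d,p)) i j :
  (X^T *m B *m Y) i j = ipB B (col i X) (col j Y).
Proof. by rewrite /ipB tr_col -col_mulE -!row_mul !mxE. Qed.

Lemma col_Smx (R : realType) d (s : seq 'cV[R]_d) (j : 'I_(size s)) :
  col j (Smx s) = nth 0 s j.
Proof. by apply/matrixP => a b; rewrite !mxE (ord1 b). Qed.

Lemma ipBDl (R : realType) d (B : 'M[R]_d) u1 u2 v :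
  ipB B (u1 + u2) v = ipB B u1 v + ipB B u2 v.
Proof. by rewrite /ipB linearD /= !mulmxDl mxE. Qed.
Lemma ipBDr (R : realType) d (B : 'M[R]_d) u v1 v2 :
  ipB B u (v1 + v2) = ipB B u v1 + ipB B u v2.
Proof. by rewrite /ipB mulmxDr mxE. Qed.
Lemma ipBBr (R : realType) d (B : 'M[R]_d) u v1 v2 :
  ipB B u (v1 - v2) = ipB B u v1 - ipB B u v2.
Proof. by rewrite /ipB mulmxBr !mxE. Qed.
Lemma ipBZl (R : realType) d (B : 'M[R]_d) a u v :
  ipB B (a *: u) v = a * ipB B u v.
Proof. by rewrite /ipB linearZ /= -!scalemxAl mxE. Qed.
Lemma ipBZr (R : realType) d (B : 'M[R]_d) a u v :
  ipB B u (a *: v) = a * ipB B u v.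
Proof. by rewrite /ipB -!scalemxAr mxE. Qed.

Lemma zmod_id (V : zmodType) (a b c e : V) : a + b - e = a + c - e + (b - c).
Proof. by rewrite addrAC [a + c - e]addrAC -!addrA; congr (_ + _); by rewrite [c + _]addrC subrK. Qed.
Definition Vt (R : realType) d (M : 'M[R]_d) (r0 : 'cV[R]_d) n : 'M[R]_(n, d) :=
  \matrix_(j < n, i < d) (iter j (mulmx M) r0) i 0.
Definition inK (R : realType) d (M : 'M[R]_d) (r0 : 'cV[R]_d) n p (X : 'M[R]_(d,p)) : bool :=
  (X^T <= Vt M r0 n)%MS.

Lemma row_Vt (R : realType) d (M : 'M[R]_d) r0 n (j : 'I_n) :
  row j (Vt M r0 n) = (iter j (mulmx M) r0)^T.
Proof. by apply/matrixP => a b; rewrite !mxE (ord1 a). Qed.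

Lemma Vt_mono (R : realType) d (M : 'M[R]_d) r0 n n' :
  (n <= n')%N -> (Vt M r0 n <= Vt M r0 n')%MS.
Proof.
move=> hn; apply/row_subP => j.
have hj : (j < n')%N by apply: leq_trans (ltn_ord j) hn.
by have := row_sub (Ordinal hj) (Vt M r0 n'); rewrite !row_Vt.
Qed.

Lemma inK_mono (R : realType) d (M : 'M[R]_d) r0 n n' p (X : 'M[R]_(d,p)) :
  (n <= n')%N -> inK M r0 n X -> inK M r0 n' X.
Proof. by move=> hn hX; apply: submx_trans hX (Vt_mono _ _ hn). Qed.

Lemma inK_mul (R : realType) d (M : 'M[R]_d) r0 n p q (X : 'M[R]_(d,p)) (Y : 'M[R]_(p,q)) :
  inK M r0 n X -> inK M r0 n (X *m Y).
Proof. by move=> hX; rewrite /inK trmx_mul; apply: submx_trans hX; apply: submxMl. Qed.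

Lemma inK_add (R : realType) d (M : 'M[R]_d) r0 n p (X Y : 'M[R]_(d,p)) :
  inK M r0 n X -> inK M r0 n Y -> inK M r0 n (X + Y).
Proof. by move=> hX hY; rewrite /inK linearD /=; apply: addmx_sub. Qed.

Lemma inK_scale (R : realType) d (M : 'M[R]_d) r0 n p a (X : 'M[R]_(d,p)) :
  inK M r0 n X -> inK M r0 n (a *: X).
Proof. by move=> hX; rewrite /inK linearZ /=; apply: scalemx_sub. Qed.

Lemma inK_sub (R : realType) d (M : 'M[R]_d) r0 n p (X Y : 'M[R]_(d,p)) :
  inK M r0 n X -> inK M r0 n Y -> inK M r0 n (X - Y).
Proof.
move=> hX hY; apply: inK_add => //; rewrite -scaleN1r; exact: inK_scale.
Qed.

Lemma inK_r0 (R : realType) d (M : 'M[R]_d) r0 : inK M r0 1 r0.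
Proof. by have := row_sub (@ord0 0) (Vt M r0 1); rewrite row_Vt. Qed.

Lemma inK_M (R : realType) d (M : 'M[R]_d) r0 n p (X : 'M[R]_(d,p)) :
  inK M r0 n X -> inK M r0 n.+1 (M *m X).
Proof.
move=> hX; rewrite /inK trmx_mul; apply: submx_trans (submxMr M^T hX) _.
apply/row_subP => j; rewrite row_mul row_Vt -trmx_mul.
have hj : (j.+1 < n.+1)%N by rewrite ltnS ltn_ord.
by have := row_sub (Ordinal hj) (Vt M r0 n.+1); rewrite row_Vt.
Qed.

Lemma inK_cols (R : realType) d (M : 'M[R]_d) r0 n p (X : 'M[R]_(d,p)) :
  (forall j, inK M r0 n (col j X)) -> inK M r0 n X.
Proof. by move=> h; rewrite /inK; apply/row_subP => j; rewrite -tr_col; apply: h. Qed.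

Lemma span_of (R : realType) d (M : 'M[R]_d) r0 n (S : 'M[R]_(d,n)) :
  S^T *m M *m S = 1%:M -> inK M r0 n S ->
  forall p (X : 'M[R]_(d,p)), inK M r0 n X -> exists C : 'M[R]_(n,p), X = S *m C.
Proof.
move=> hO hS p X hX.
have rk : (n <= \rank S^T)%N.
  apply: (@mulmx1_min_rank _ n n d S^T 1%:M (M *m S)).
  by rewrite mul1mx mulmxA.
have sub : (Vt M r0 n <= S^T)%MS.
  rewrite -(geq_leqif (mxrank_leqif_sup hS)).
  exact: leq_trans (rank_leq_row _) rk.
have /submxP [D hD] := submx_trans hX sub.
exists D^T; by rewrite -[X]trmxK hD trmx_mul trmxK.
Qed.

Lemma spd_unit (R : realType) d (S : 'M[R]_d) : spd S -> S \in unitmx.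
Proof.
move=> [hT hP]; rewrite -row_free_unit -kermx_eq0; apply/negPn/negP => hK.
set u := nz_row (kermx S).
have hu : u != 0 by rewrite nz_row_eq0.
have huS : u *m S = 0 by apply/sub_kermxP; apply: nz_row_sub.
have := hP u^T; rewrite trmx_eq0 => /(_ hu).
by rewrite /ipB trmxK huS mul0mx mxE ltxx.
Qed.

Lemma ipB_ge0 (R : realType) d (S : 'M[R]_d) v : spd S -> 0 <= ipB S v v.
Proof.
move=> [_ hP]; have [->|hv] := eqVneq v 0; last exact/ltW/hP.
by rewrite /ipB mulmx0 mxE.
Qed.

Lemma M_sym (R : realType) d (A S : 'M[R]_d) : S^T = S -> (bcgM A S)^T = bcgM A S.
Proof. by move=> hS; rewrite /bcgM !trmx_mul trmxK hS mulmxA. Qed.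

Lemma ipB_M (R : realType) d (A S : 'M[R]_d) v :
  ipB (bcgM A S) v v = ipB S (A^T *m v) (A^T *m v).
Proof. by rewrite /ipB /bcgM trmx_mul trmxK !mulmxA. Qed.

Lemma M_pos (R : realType) d (A S : 'M[R]_d) v :
  A \in unitmx -> spd S -> v != 0 -> 0 < ipB (bcgM A S) v v.
Proof.
move=> hA [_ hP] hv; rewrite ipB_M; apply: hP.
apply: contraNneq hv => h.
have hAT : A^T \in unitmx by rewrite unitmx_tr.
by rewrite -(mulKmx hAT v) h mulmx0.
Qed.

Lemma orth_mx (R : realType) d (B : 'M[R]_d) (s : seq 'cV[R]_d) :
  (forall i j, (i < size s)%N -> (j < size s)%N ->
     ipB B (nth 0 s i) (nth 0 s j) = (i == j)%:R) ->
  (Smx s)^T *m B *m Smx s = 1%:M.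
Proof.
move=> h; apply/matrixP => i j; rewrite ipB_entry !col_Smx h // mxE.
by [].
Qed.

Lemma iter_conv (R : realType) d (A S : 'M[R]_d) (r0 : 'cV[R]_d) i :
  iter i (mulmx (S *m A^T *m A)) (S *m A^T *m r0) =
  S *m A^T *m iter i (mulmx (bcgM A S)) r0.
Proof.
elim: i => [|i IH] //=; rewrite IH /bcgM !mulmxA //.
Qed.

Lemma conv1 (R : realType) d (A S : 'M[R]_d) (r0 w : 'cV[R]_d) n :
  inK (bcgM A S) r0 n.+1 w ->
  in_krylov n (S *m A^T *m A) (S *m A^T *m r0) (S *m A^T *m w).
Proof.
move=> /submxP [D hD]; exists (fun i => D 0 i).
under eq_bigr => i _ do rewrite iter_conv scalemxAr.
rewrite -mulmx_sumr; congr (_ *m _).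
rewrite -[w]trmxK hD mulmx_sum_row trmx_sumE; apply: eq_bigr => i _.
by rewrite linearZ /= row_Vt trmxK.
Qed.

Lemma conv2 (R : realType) d (A S : 'M[R]_d) (r0 x : 'cV[R]_d) n :
  in_krylov n (S *m A^T *m A) (S *m A^T *m r0) x ->
  exists w, inK (bcgM A S) r0 n.+1 w /\ x = S *m A^T *m w.
Proof.
move=> [c ->]; exists (\sum_(i < n.+1) c i *: iter i (mulmx (bcgM A S)) r0); split.
  rewrite /inK trmx_sumE; apply: summx_sub => i _; rewrite linearZ /=.
  by apply: scalemx_sub; rewrite -row_Vt row_sub.
rewrite mulmx_sumr; apply: eq_bigr => i _.
by rewrite iter_conv scalemxAr.
Qed.

Lemma x_formula (R : realType) d (A Sigma0 : 'M[R]_d) (b x0 : 'cV[R]_d) (s : seq 'cV[R]_d) :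
  (Smx s)^T *m bcgM A Sigma0 *m Smx s = 1%:M ->
  bcg_x A Sigma0 b x0 s =
  x0 + Sigma0 *m A^T *m (Smx s *m ((Smx s)^T *m (b - A *m x0))).
Proof. by move=> hO; rewrite /bcg_x hO invmx1 mulmx1 !mulmxA. Qed.

Lemma resid (R : realType) d (A Sigma0 : 'M[R]_d) (b x0 : 'cV[R]_d) (s : seq 'cV[R]_d) :
  (Smx s)^T *m bcgM A Sigma0 *m Smx s = 1%:M ->
  b - A *m bcg_x A Sigma0 b x0 s =
  (b - A *m x0) - bcgM A Sigma0 *m (Smx s *m ((Smx s)^T *m (b - A *m x0))).
Proof. by move=> hO; rewrite x_formula // mulmxDr opprD addrA /bcgM !mulmxA. Qed.

Lemma resid_orth (R : realType) d n (M : 'M[R]_d) (S : 'M[R]_(d,n)) (r0 : 'cV[R]_d) :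
  S^T *m M *m S = 1%:M -> S^T *m (r0 - M *m (S *m (S^T *m r0))) = 0.
Proof. by move=> hO; rewrite mulmxBr !mulmxA hO mul1mx subrr. Qed.

Lemma orth_vec (R : realType) d n (S : 'M[R]_(d,n)) (r : 'cV[R]_d) (e : 'cV[R]_n) :
  S^T *m r = 0 -> r^T *m (S *m e) = 0.
Proof. by move=> h; rewrite mulmxA -[S]trmxK -trmx_mul h trmx0 mul0mx. Qed.

Lemma stilde_cons (R : realType) d (A Sigma0 : 'M[R]_d) (b x0 : 'cV[R]_d) (s : seq 'cV[R]_d) :
  s != [::] ->
  bcg_stilde_next A Sigma0 b x0 s =
  (b - A *m bcg_x A Sigma0 b x0 s) -
  ipB (bcgM A Sigma0) (last 0 s) (b - A *m bcg_x A Sigma0 b x0 s) *: last 0 s.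
Proof. by case: s. Qed.

Definition Inv (R : realType) d (A Sigma0 : 'M[R]_d) (b x0 : 'cV[R]_d) k (s : seq 'cV[R]_d) :=
  [/\ size s = k,
      (forall i j, (i < k)%N -> (j < k)%N ->
        ipB (bcgM A Sigma0) (nth 0 s i) (nth 0 s j) = (i == j)%:R) &
      (forall j, (j < k)%N -> inK (bcgM A Sigma0) (b - A *m x0) j.+1 (nth 0 s j))].

Lemma inv_all (R : realType) d (A Sigma0 : 'M[R]_d) (b x0 : 'cV[R]_d) (m : nat) :
  A \in unitmx -> spd Sigma0 ->
  (forall k : nat, (1 <= k <= m)%N -> bcg_stilde A Sigma0 b x0 k != 0) ->
  forall k, (k <= m)%N -> Inv A Sigma0 b x0 k (bcg_dirs A Sigma0 b x0 k).
Proof.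
move=> hA hS hst; elim=> [|k IH] hk; first by split.
have [hsz hO hK] := IH (ltnW hk).
set s := bcg_dirs A Sigma0 b x0 k.
set M := bcgM A Sigma0.
set r0 := b - A *m x0.
have hMT : M^T = M by apply: M_sym; case: hS.
have hst' : bcg_stilde_next A Sigma0 b x0 s != 0 by apply: (hst k.+1); rewrite ltnS hk.
set st := bcg_stilde_next A Sigma0 b x0 s in hst'.
have hO' : (Smx s)^T *m M *m Smx s = 1%:M by apply: orth_mx; rewrite hsz.
have hSK : inK M r0 (size s) (Smx s).
  apply: inK_cols => j; rewrite col_Smx; apply: (inK_mono _ (hK j _)).
    exact: ltn_ord.
  by apply: leq_trans (ltn_ord j) _; rewrite hsz.
have c1 : inK M r0 k.+1 st.
  have [s0|sn0] := eqVneq s [::].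
    by rewrite /st s0 /=; apply: (inK_mono _ (inK_r0 _ _)).
  have kp : (0 < k)%N by rewrite -hsz lt0n size_eq0.
  rewrite /st stilde_cons // resid //.
  apply: inK_sub; first apply: inK_sub.
  - exact: (inK_mono _ (inK_r0 _ _)).
  - apply: inK_M; rewrite -hsz; exact: inK_mul.
  apply: inK_scale; rewrite -nth_last hsz; apply: (inK_mono _ (hK _ _)).
    by rewrite prednK.
  by rewrite prednK.
have c2 : forall j, (j < k)%N -> ipB M (nth 0 s j) st = 0.
  move=> j hj.
  have sn0 : s != [::] by rewrite -size_eq0 hsz -lt0n; apply: leq_ltn_trans hj.
  have kp : (0 < k)%N by apply: leq_ltn_trans hj.
  rewrite /st stilde_cons // ipBBr ipBZr -nth_last hsz.
  have [ejk|njk] := eqVneq j k.-1.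
    by rewrite ejk hO ?eqxx ?mulr1 ?subrr // prednK.
  have hjk : (j.+1 < k)%N by move: hj njk kp; lia.
  rewrite hO ?(negbTE njk) ?mulr0 ?subr0; last 2 first.
  - by [].
  - by rewrite prednK.
  have hMj : inK M r0 (size s) (M *m nth 0 s j).
    by rewrite hsz; apply: (inK_mono hjk); apply: inK_M; apply: hK.
  have [C hC] := span_of hO' hSK hMj.
  rewrite resid // /ipB.
  have -> : (nth 0 s j)^T *m bcgM A Sigma0 = (M *m nth 0 s j)^T by rewrite trmx_mul hMT.
  rewrite hC trmx_mul -mulmxA resid_orth // mulmx0 mxE //.
set N := normB M st.
have hq : 0 < ipB M st st by apply: M_pos.
have hN : N^-1 * N^-1 * ipB M st st = 1.
  rewrite -invfM -expr2 /N /normB sqr_sqrtr ?ltW // mulVf //.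
  by rewrite gt_eqF.
have -> : bcg_dirs A Sigma0 b x0 k.+1 = rcons s (N^-1 *: st) by [].
have cs : forall j, (j < k)%N -> ipB M (nth 0 s j) (N^-1 *: st) = 0.
  by move=> j hj; rewrite ipBZr c2 // mulr0.
split.
- by rewrite size_rcons hsz.
- move=> i j hi hj; rewrite !nth_rcons hsz.
  case: (ltngtP i k) => [hik|hki|->]; first last.
  + case: (ltngtP j k) => [hjk|hkj|_]; first last.
    * by rewrite ipBZl ipBZr mulrA hN.
    * by move: hj; rewrite ltnS leqNgt hkj.
    * by rewrite ipB_sym // cs.
  + by move: hi; rewrite ltnS leqNgt hki.
  + case: (ltngtP j k) => [hjk|hkj|ejk]; first by rewrite hO.
    * by move: hj; rewrite ltnS leqNgt hkj.
    * by rewrite cs // ejk (ltn_eqF hik).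
- move=> j hj; rewrite nth_rcons hsz.
  case: (ltngtP j k) => [hjk|hkj|ejk].
  + by apply: (inK_mono _ (hK j hjk)).
  + by move: hj; rewrite ltnS leqNgt hkj.
  + by rewrite ejk; apply: inK_scale.
Qed.

Lemma ipB_inv (R : realType) d (S : 'M[R]_d) y :
  spd S -> ipB (invmx S) (S *m y) (S *m y) = ipB S y y.
Proof.
move=> hS; have hU := spd_unit hS; case: hS => hT _.
by rewrite /ipB trmx_mul hT -!mulmxA (mulKVmx hU).
Qed.

Lemma zmod_id2 (V : zmodType) (a y b : V) : a + y - b = - ((b - a) - y).
Proof. by rewrite !opprB addrA [y + a]addrC. Qed.

Theorem proposition8 (R : realType) (d : nat) (A Sigma0 : 'M[R]_d)
  (b x0 : 'cV[R]_d) (m : nat) :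
  A \in unitmx ->
  spd Sigma0 ->
  (0 < m)%N ->
  (forall k : nat, (1 <= k <= m)%N -> bcg_stilde A Sigma0 b x0 k != 0) ->
  let xstar := invmx A *m b in
  in_Kstar A Sigma0 b x0 m.-1 (bcg_mean A Sigma0 b x0 m) /\
  forall x : 'cV[R]_d, in_Kstar A Sigma0 b x0 m.-1 x ->
    normB (invmx Sigma0) (bcg_mean A Sigma0 b x0 m - xstar)
      <= normB (invmx Sigma0) (x - xstar).
Proof.
move=> hA hS hm hst xstar.
have [hsz hO hK] := inv_all hA hS hst (leqnn m).
rewrite /bcg_mean.
set s := bcg_dirs A Sigma0 b x0 m in hsz hO hK *.
set M := bcgM A Sigma0.
set r0 := b - A *m x0.
have hO' : (Smx s)^T *m M *m Smx s = 1%:M by apply: orth_mx; rewrite hsz.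
have hSK : inK M r0 (size s) (Smx s).
  apply: inK_cols => j; rewrite col_Smx; apply: (inK_mono _ (hK j _)).
    exact: ltn_ord.
  by apply: leq_trans (ltn_ord j) _; rewrite hsz.
rewrite (x_formula _ _ hO').
set cs := (Smx s)^T *m r0.
split.
  exists (Sigma0 *m A^T *m (Smx s *m cs)); split => //.
  apply: conv1; rewrite prednK // -hsz; exact: inK_mul.
move=> x [v [hv ->]].
have [w [hw ->]] := conv2 hv.
rewrite prednK // -hsz in hw.
have [C ->] := span_of hO' hSK hw.
apply: ler_wsqrtr.
rewrite [in X in _ <= X](zmod_id x0 _ (Sigma0 *m A^T *m (Smx s *m cs))).
set u := x0 + Sigma0 *m A^T *m (Smx s *m cs) - xstar.
set e := C - cs.
have -> : Sigma0 *m A^T *m (Smx s *m C) - Sigma0 *m A^T *m (Smx s *m cs)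
  = Sigma0 *m A^T *m (Smx s *m e) by rewrite -!mulmxBr.
have hU := spd_unit hS.
have hSi : (invmx Sigma0)^T = invmx Sigma0 by rewrite trmx_inv; case: hS => -> _.
have hAu : A *m u = - (r0 - M *m (Smx s *m cs)).
  by rewrite /u mulmxBr mulmxDr (mulKVmx hA) /M /bcgM !mulmxA zmod_id2.
have h1 : ipB (invmx Sigma0) u (Sigma0 *m A^T *m (Smx s *m e)) = 0.
  rewrite /ipB -!mulmxA (mulKmx hU) mulmxA -trmx_mul hAu linearN /= mulNmx.
  by rewrite orth_vec ?oppr0 ?mxE // resid_orth.
set z := Sigma0 *m A^T *m (Smx s *m e) in h1 *.
rewrite (ipBDl _ u z (u + z)) (ipBDr _ u u z) (ipBDr _ z u z) h1.
rewrite [ipB _ z u]ipB_sym // h1 addr0 add0r lerDl.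
rewrite /z -mulmxA ipB_inv //; exact: ipB_ge0.
Qed.
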